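(* Let $t\in\mathbb{Z}_+$ and $\alpha\in(0,1)$. Let $\mathcal{Q}_1,\dots,\mathcal{Q}_t$ be probability distributions on $\mathbb{R}$ with continuous CDFs $F_1,\dots,F_t$. Let $\mathcal{D}_1,\dots,\mathcal{D}_t$ be independent datasets, where $\mathcal{D}_j=\{u_{j,i}\}_{i=1}^{B_j}$ consists of $B_j\ge 1$ i.i.d. samples from $\mathcal{Q}_j$. Fix $k\in\{1,\dots,t\}$ and $\delta\in(0,1)$. Then with probability at least $1-\delta$, $$\big|F_t(\widehat{q}_{t,k})-(1-\alpha)\big|\le \phi(t,k)+\psi(t,k,\delta).$$
   Context: For a CDF $F$ and $\gamma\in(0,1)$, the left $\gamma$-quantile is $\mathsf{Q}^-_\gamma(F)=\inf\{x\in\mathbb{R}:F(x)\ge\gamma\}$. Let $B_{t,k}=\sum_{j=t-k+1}^t B_j$, and let $\widehat{F}_{t,k}(x)=\frac{1}{B_{t,k}}\sum_{j=t-k+1}^t\sum_{i=1}^{B_j}\mathbf{1}\{x\ge u_{j,i}\}$ be the empirical CDF of the data in the last $k$ periods. Define $\widehat{q}_{t,k}=\mathsf{Q}^-_{1-\alpha}(\widehat{F}_{t,k})$, $\phi(t,k)=\max_{t-k+1\le j\le t}\|F_j-F_t\|_\infty$, and $\psi(t,k,\delta)=\frac{5}{4}\sqrt{\frac{2\alpha(1-\alpha)\log(2/\delta)}{B_{t,k}}}+\frac{4\log(2/\delta)}{B_{t,k}}$. *)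

(* Defs.v *)
From HB Require Import structures.
From mathcomp Require Import all_boot all_order all_algebra.
From mathcomp Require Import all_classical all_reals all_analysis.
Set Implicit Arguments. Unset Strict Implicit. Unset Printing Implicit Defensive.
Import Order.TTheory GRing.Theory Num.Def Num.Theory.
Import numFieldNormedType.Exports.
Local Open Scope classical_set_scope.
Local Open Scope ring_scope.

Definition dcdf (R : realType) (Q : probability R R) (x : R) : R :=
  fine (Q [set y : R | y <= x]).

Definition left_quantile (R : realType) (g : R) (F : R -> R) : R :=
  inf [set x : R | g <= F x].

Definition sup_dist (R : realType) (F G : R -> R) : R :=
  sup [set `|F x - G x| | x in [set: R]].

Definition mutually_independent d (T : measurableType d) (R : realType)
  (P : probability T R) (K : eqType) (I : set K) (X : K -> {RV P >-> R}) :=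
  forall (s : seq K), (forall k, k \in s -> I k) -> uniq s ->
  forall A : K -> set R, (forall k, measurable (A k)) ->
  P (\bigcap_(k in [set k | k \in s]) (X k @^-1` A k)) =
    (\prod_(k <- s) P (X k @^-1` A k))%E.

(* Main.v *)
Require Import Defs.
From HB Require Import structures.
From mathcomp Require Import all_boot all_order all_algebra.
From mathcomp Require Import all_classical all_reals all_analysis.
From mathcomp Require Import ring lra.
Import Order.TTheory GRing.Theory Num.Def Num.Theory.
Import numFieldNormedType.Exports.
Local Open Scope classical_set_scope.
Local Open Scope ring_scope.
From mathcomp Require Import zify.
Section ExpBound.
Variable R : realType.
Lemma poly8 (y : R) : -(1/16) <= y <= 1/16 ->
  1 <= (1 + 8*y + 50*y^+2) * (1 - y)^+8.
Proof.
move=> /andP[h1 h2].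
have e : (1 + 8*y + 50*y^+2) * (1 - y)^+8 = 1 + y^+2 * (14 - 232*y + 1022*y^+2 - 2296*y^+3 + 3080 * y^+4 - 2584*y^+5 + 1337*y^+6 - 392*y^+7 + 50*y^+8) by ring.
rewrite e.
have : 0 <= 14 - 232*y + 1022*y^+2 - 2296*y^+3 + 3080 * y^+4 - 2584*y^+5 + 1337*y^+6 - 392*y^+7 + 50*y^+8 by nra.
move=> h; have := sqr_ge0 y; nra.
Qed.

Lemma expR_le_inv (y : R) : y < 1 -> expR y * (1 - y) <= 1.
Proof.
move=> hy.
have h := expR_ge1Dx (- y).
have := expR_gt0 y.
rewrite expRN in h.
move=> hp.
have : (1 - y) * expR y <= (expR y)^-1 * expR y by rewrite ler_pM2r.
by rewrite mulVf ?gt_eqF // mulrC.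
Qed.

Lemma expR_quad (x : R) : -(1/2) <= x <= 1/2 ->
  expR x <= 1 + x + 25/32 * x^+2.
Proof.
move=> /andP[h1 h2].
set y := x / 8.
have hx : x = 8 * y by rewrite /y; field.
have hy : -(1/16) <= y <= 1/16 by apply/andP; split; rewrite /y; lra.
have hp := @poly8 y hy.
have e8 : expR x = expR y ^+ 8 by rewrite hx -expRM_natl.
have hyl : y < 1 by lra.
have h1y := @expR_le_inv y hyl.
have h0 : 0 < 1 - y by lra.
have hpos : 0 < expR y := expR_gt0 y.
have q : (expR y * (1 - y)) ^+ 8 <= 1.
  apply: exprn_ile1; last by [].
  by apply: mulr_ge0; lra.
rewrite exprMn in q.
have h0' : 0 < (1 - y) ^+ 8 by apply: exprn_gt0.
rewrite e8.
have : expR y ^+ 8 <= ((1 - y) ^+ 8)^-1 by rewrite -div1r ler_pdivlMr.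
move=> h3; apply: (le_trans h3).
rewrite -div1r ler_pdivrMr //.
suff -> : 1 + x + 25 / 32 * x ^+ 2 = 1 + 8 * y + 50 * y ^+ 2 by [].
by rewrite hx; field.
Qed.

Lemma bern_mgf (p l : R) : 0 <= p <= 1 -> -(1/2) <= l <= 1/2 ->
  (1 - p) * expR (- (l * p)) + p * expR (l * (1 - p)) <= expR (25/32 * l^+2 * (p * (1 - p))).
Proof.
move=> /andP[p0 p1] /andP[l0 l1].
have e1 := @expR_quad (- (l * p)).
have e2 := @expR_quad (l * (1 - p)).
have h1 : - (1 / 2) <= - (l * p) <= 1 / 2 by apply/andP; split; nra.
have h2 : - (1 / 2) <= l * (1 - p) <= 1 / 2 by apply/andP; split; nra.
have {}e1 := e1 h1; have {}e2 := e2 h2.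
apply: le_trans (expR_ge1Dx _).
have q1 : 0 <= 1 - p by lra.
have := ler_wpM2l q1 e1; have := ler_wpM2l p0 e2.
move=> a b.
have : (1 - p) * (1 + - (l * p) + 25 / 32 * (- (l * p)) ^+ 2) +
   p * (1 + l * (1 - p) + 25 / 32 * (l * (1 - p)) ^+ 2) = 1 + 25 / 32 * l ^+ 2 * (p * (1 - p)) by ring.
move=> e; rewrite -e; exact: lerD.
Qed.

Fixpoint gtail (ps : seq R) (a : R) : R :=
  match ps with
  | [::] => ((a <= 0)%R)%:R
  | p :: ps' => p * gtail ps' (a - 1) + (1 - p) * gtail ps' a
  end.

Lemma gtail_bound (ps : seq R) (l : R) : all (fun p => 0 <= p <= 1) ps -> 0 <= l ->
  forall a, gtail ps a <= expR (- (l * a)) * \prod_(p <- ps) (1 - p + p * expR l).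
Proof.
move=> hps hl; elim: ps hps => [|p ps IH] /= hps a.
  rewrite big_nil mulr1; have [ha|ha] := boolP (a <= 0); rewrite ?(negbTE ha) ?ha /=.
    by rewrite -expR0 ler_expR; nra.
  exact: expR_ge0.
move/andP: hps => [/andP[p0 p1] hps].
rewrite big_cons.
have A1 := IH hps (a - 1); have A2 := IH hps a.
set M := \prod_(j <- ps) _ in A1 A2 *.
have q1 : 0 <= 1 - p by lra.
apply: le_trans (lerD (ler_wpM2l p0 A1) (ler_wpM2l q1 A2)) _.
have -> : expR (- (l * (a - 1))) = expR (- (l * a)) * expR l by rewrite -expRD; congr expR; ring.
by rewrite le_eqVlt; apply/orP; left; apply/eqP; ring.
Qed.

Lemma gtail_chernoff (ps : seq R) (l a : R) : all (fun p => 0 <= p <= 1) ps ->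
  0 <= l <= 1/2 ->
  gtail ps a <= expR (- (l * (a - \sum_(p <- ps) p)) +
                      25/32 * l^+2 * \sum_(p <- ps) (p * (1 - p))).
Proof.
move=> hps /andP[l0 l1].
apply: le_trans (@gtail_bound ps l hps l0 a) _.
have -> : expR (- (l * (a - \sum_(p <- ps) p)) + 25 / 32 * l ^+ 2 * \sum_(p <- ps) p * (1 - p))
  = expR (- (l * a)) * expR (\sum_(p <- ps) (l * p + 25 / 32 * l ^+ 2 * (p * (1 - p)))).
  rewrite -expRD; congr expR; rewrite big_split /= -!mulr_sumr; ring.
rewrite ler_pM2l ?expR_gt0 // expR_sum.
elim: ps hps => [|p ps IH] /=; first by rewrite !big_nil.
move=> /andP[hp hps]; rewrite !big_cons.
apply: ler_pM; last exact: IH.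
- move: hp => /andP[p0 p1]; have := expR_gt0 l; nra.
- rewrite big_seq; apply: prodr_ge0 => j /(allP hps) /andP[j0 j1].
  have := expR_gt0 l; nra.
- move: hp => hp.
  have hl : -(1/2) <= l <= 1/2 by apply/andP; split; lra.
  rewrite expRD.
  have -> : 1 - p + p * expR l = expR (l * p) * ((1 - p) * expR (- (l * p)) + p * expR (l * (1 - p))).
    rewrite mulrDr !mulrA ![expR (l * p) * _]mulrC -!mulrA -!expRD.
    have -> : l * p - l * p = 0 by ring.
    have -> : l * p + l * (1 - p) = l by ring.
    by rewrite expR0 mulr1.
  rewrite ler_pM2l ?expR_gt0 //.
  exact: (@bern_mgf p l hp hl).
Qed.

Lemma choose_lambda (n g e L v : R) : 0 < n -> 0 <= g -> 0 < L -> 0 <= v <= n * (g + e) ->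
  4 * L / n <= e -> 4 * (25/32) * L * (g + e) <= n * e^+2 ->
  exists l, 0 <= l <= 1/2 /\ - (l * (n * e)) + 25/32 * l^+2 * v <= - L.
Proof.
move=> n0 g0 L0 /andP[v0 v1] he hq.
have e0 : 0 < e.
  apply: lt_le_trans he; apply: divr_gt0 => //; lra.
have ge0 : 0 < g + e by lra.
have he' : 4 * L <= n * e by rewrite -ler_pdivrMl // mulrC.
set K := 25/32 : R.
have K0 : 0 < K by rewrite /K; lra.
have hv : 25/32 * v <= K * (n * (g + e)) by rewrite /K; nra.
case: (leP (e / (2 * K * (g + e))) (1/2)) => hl.
- exists (e / (2 * K * (g + e))); split.
    by apply/andP; split => //; apply: divr_ge0; [lra | nra].
  set l := e / (2 * K * (g + e)) in hl *.
  have l0 : 0 <= l by rewrite /l; apply: divr_ge0; [lra | nra].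
  have hlK : l * (2 * K * (g + e)) = e by rewrite /l mulrVK // unitfE; apply: lt0r_neq0; nra.
  have : 25 / 32 * l ^+ 2 * v <= l^+2 * (K * (n * (g + e))).
    by rewrite -mulrA mulrCA; apply: ler_wpM2l => //; apply: sqr_ge0.
  move=> h1.
  have h2 : l ^+ 2 * (K * (n * (g + e))) = l * (n * e) / 2.
    have h2 : l^+2*(K*(n*(g+e))) = l*n*(l*(2*K*(g+e)))/2 by field.
    by rewrite h2 hlK; field.
  have h3 : L <= l * (n * e) / 2.
    have -> : l * (n * e) / 2 = n * e^+2 / (4 * K * (g + e)).
      rewrite /l; field; apply/andP; split; apply: lt0r_neq0 => //; nra.
    rewrite ler_pdivlMr; last nra.
    by rewrite /K; lra.
  move: h1 h2 h3; rewrite /K => h1 h2 h3; lra.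
- exists (1/2); split; first by apply/andP; split; lra.
  have h1 : K * (g + e) < e.
    move: hl; rewrite ltr_pdivlMr; last nra.
    move=> hl; nra.
  have : K * (n * (g + e)) <= n * e by nra.
  move: hv; rewrite /K => hv h4; nra.
Qed.
End ExpBound.

Arguments gtail {R}.
Section Tail.
Context d (T : measurableType d) (R : realType) (P : probability T R)
  (K : eqType) (I : set K) (X : K -> {RV P >-> R}) (S : K -> set R).
Hypothesis indep : mutually_independent I X.
Hypothesis mS : forall k, measurable (S k).

Definition cnt (s : seq K) (w : T) : R := \sum_(k <- s) (X k w \in S k)%:R.
Definition pr k := fine (P (X k @^-1` S k)).
Definition Cap (r : seq K) (A : K -> set R) :=
  \bigcap_(k in [set k | k \in r]) (X k @^-1` A k).

Lemma Cap_nil A : Cap [::] A = setT.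
Proof. by apply/seteqP; split => w //= _ k; rewrite /= in_nil. Qed.

Lemma Cap_cons y r A : Cap (y :: r) A = X y @^-1` A y `&` Cap r A.
Proof.
apply/seteqP; split => w /=.
  move=> h; split; first by apply: h; rewrite /= mem_head.
  by move=> k /= kr; apply: h; rewrite /= in_cons kr orbT.
move=> [h1 h2] k /=; rewrite in_cons => /orP[/eqP -> //|kr].
exact: h2.
Qed.

Lemma Cap_eq r A A' : (forall k, k \in r -> A k = A' k) -> Cap r A = Cap r A'.
Proof.
move=> h; apply/seteqP; split => w /= H k /= kr.
  by rewrite -h //; exact: H.
by rewrite h //; exact: H.
Qed.

Lemma Cap_meas r A : (forall k, measurable (A k)) -> measurable (Cap r A).
Proof.
move=> mA; elim: r => [|y r IH]; first by rewrite Cap_nil.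
rewrite Cap_cons; apply: measurableI => //; exact: measurable_funPTI.
Qed.

Lemma P_Cap r A : uniq r -> (forall k, k \in r -> I k) -> (forall k, measurable (A k)) ->
  P (Cap r A) = (\prod_(k <- r) P (X k @^-1` A k))%E.
Proof. by move=> ur rI mA; apply: indep. Qed.

Lemma cnt_cons y s w : cnt (y :: s) w = (X y w \in S y)%:R + cnt s w.
Proof. by rewrite /cnt big_cons. Qed.

Lemma D_cons y s a : [set w | a <= cnt (y :: s) w] =
  (X y @^-1` S y `&` [set w | a - 1 <= cnt s w]) `|`
  (X y @^-1` (~` S y) `&` [set w | a <= cnt s w]).
Proof.
apply/seteqP; split => w /=; rewrite cnt_cons.
  case: (boolP (X y w \in S y)) => h /=.
    by move=> ha; left; split; [exact: set_mem | lra].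
  rewrite add0r => ha; right; split => //.
  by move=> hS; move/negP: h; apply; exact: mem_set.
case=> [[h1 h2]|[h1 h2]].
  by rewrite mem_set //=; lra.
suff -> : (X y w \in S y) = false by rewrite add0r.
by apply/negP => /set_mem.
Qed.

Lemma D_meas s a : measurable [set w | a <= cnt s w].
Proof.
elim: s a => [|y s IH] a.
  have e : forall w, cnt [::] w = 0 by move=> w; rewrite /cnt big_nil.
  case: (boolP (a <= 0)) => h.
    rewrite (_ : [set w | a <= cnt [::] w] = setT) //.
    by apply/seteqP; split => w //= _; rewrite e.
  rewrite (_ : [set w | a <= cnt [::] w] = set0) //.
  by apply/seteqP; split => w //=; rewrite e => h'; move/negP: h.
rewrite D_cons; apply: measurableU; apply: measurableI => //;
  apply: measurable_funPTI => //; exact: measurableC.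
Qed.


Lemma P_Cap_cons y r A B0 : uniq (y :: r) -> (forall k, k \in y :: r -> I k) ->
  (forall k, measurable (A k)) -> measurable B0 ->
  P (X y @^-1` B0 `&` Cap r A) = (P (X y @^-1` B0) * P (Cap r A))%E.
Proof.
move=> ur rI mA mB.
pose A1 := fun k => if k == y then B0 else A k.
have mA1 : forall k, measurable (A1 k) by move=> k; rewrite /A1; case: ifP.
move: (ur) => /= /andP[yr ur'].
have eA : forall k, k \in r -> A1 k = A k.
  by move=> k kr; rewrite /A1; case: eqP => // ky; move: yr; rewrite -ky kr.
have -> : X y @^-1` B0 `&` Cap r A = Cap (y :: r) A1.
  by rewrite Cap_cons /A1 eqxx (@Cap_eq r A1 A eA).
rewrite P_Cap // big_cons /A1 eqxx -/A1 (@P_Cap r A ur') //; last by move=> k kr; apply: rI; rewrite in_cons kr orbT.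
congr (_ * _)%E; apply: eq_big_seq => k kr.
by have := eA k kr; rewrite /A1 => ->.
Qed.

Lemma key s : forall r A a, uniq (r ++ s) -> (forall k, k \in r ++ s -> I k) ->
  (forall k, measurable (A k)) ->
  P (Cap r A `&` [set w | a <= cnt s w]) = (P (Cap r A) * (gtail (map pr s) a)%:E)%E.
Proof.
elim: s => [|y s IH] r A a ur rI mA.
  have e : forall w, cnt [::] w = 0 by move=> w; rewrite /cnt big_nil.
  rewrite /=; case: (boolP (a <= 0)) => h /=.
    rewrite (_ : [set w | a <= cnt [::] w] = setT); last first.
      by apply/seteqP; split => w //= _; rewrite e.
    by rewrite setIT mule1.
  rewrite (_ : [set w | a <= cnt [::] w] = set0); last first.
    by apply/seteqP; split => w //=; rewrite e => h'; move/negP: h.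
  by rewrite setI0 measure0 mule0.
have ur2 : uniq ((y :: r) ++ s) by move: ur; rewrite -cat1s uniq_catCA.
have rI2 : forall k, k \in (y :: r) ++ s -> I k.
  move=> k hk; apply: rI; move: hk; rewrite /= !mem_cat !in_cons.
  by rewrite mem_cat; case: (k == y); case: (k \in r).
have uyr : uniq (y :: r) by move: ur2; rewrite cat_uniq => /andP[].
have yrI : forall k, k \in y :: r -> I k by move=> k kr; apply: rI2; rewrite mem_cat kr.
have mC := @Cap_meas r A mA.
have mXS : measurable (X y @^-1` S y) by exact: measurable_funPTI.
have mXS' : measurable (X y @^-1` ~` S y) by apply: measurable_funPTI; exact: measurableC.
rewrite D_cons setIUr measureU; first last.
- apply/seteqP; split => w //= [[_ [h1 _]] [_ [h2 _]]]; exact: h2.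
- apply: measurableI => //; apply: measurableI => //; exact: D_meas.
- apply: measurableI => //; apply: measurableI => //; exact: D_meas.
have step : forall B0 b, measurable B0 ->
    P (Cap r A `&` (X y @^-1` B0 `&` [set w | b <= cnt s w])) =
    (P (X y @^-1` B0) * P (Cap r A) * (gtail (map pr s) b)%:E)%E.
  move=> B0 b mB.
  pose A1 := fun k => if k == y then B0 else A k.
  have mA1 : forall k, measurable (A1 k) by move=> k; rewrite /A1; case: ifP.
  move: (uyr) => /= /andP[yr ur'].
  have eA : forall k, k \in r -> A1 k = A k.
    by move=> k kr; rewrite /A1; case: eqP => // ky; move: yr; rewrite -ky kr.
  have eC : Cap (y :: r) A1 = X y @^-1` B0 `&` Cap r A.
    by rewrite Cap_cons /A1 eqxx (@Cap_eq r A1 A eA).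
  rewrite setIA [Cap r A `&` _]setIC -eC IH // eC P_Cap_cons //.
have h1 := step (S y) (a - 1) (mS y).
have h2 := step (~` S y) a (measurableC (mS y)).
transitivity ((P (X y @^-1` S y) * P (Cap r A) * (gtail (map pr s) (a - 1))%:E) +
  (P (X y @^-1` ~` S y) * P (Cap r A) * (gtail (map pr s) a)%:E))%E.
  by rewrite -h1 -h2.
rewrite -preimage_setC probability_setC //.
have f1 : P (X y @^-1` S y) = (pr y)%:E by rewrite /pr fineK // fin_num_measure.
have f2 : P (Cap r A) = (fine (P (Cap r A)))%:E by rewrite fineK // fin_num_measure.
rewrite f1 f2 /= (_ : (1 + (- pr y)%:E)%E = (1 - pr y)%:E) //.
rewrite -!EFinM -EFinD; congr (_%:E); ring.
Qed.
Lemma pr_01 k : 0 <= pr k <= 1.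
Proof.
apply/andP; split; first by apply: fine_ge0; exact: measure_ge0.
rewrite /pr -[1]/(fine 1%E); apply: fine_le; rewrite ?fin_num_measure //.
- exact: measurable_funPTI.
- apply: probability_le1; exact: measurable_funPTI.
Qed.

Lemma tail_bound s (a l : R) : uniq s -> (forall k, k \in s -> I k) -> 0 <= l <= 1/2 ->
  (P [set w | (a <= cnt s w)%R] <=
  (expR (- (l * (a - \sum_(k <- s) pr k)) + 25/32 * l^+2 * \sum_(k <- s) (pr k * (1 - pr k))))%:E)%E.
Proof.
move=> us sI hl.
have := @key s [::] (fun _ => setT) a us sI (fun _ => measurableT).
rewrite Cap_nil setTI probability_setT mul1e => ->.
rewrite lee_fin.
have h := @gtail_chernoff R (map pr s) l a.
rewrite !big_map in h; apply: h => //.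
by apply/allP => p /mapP [k _ ->]; exact: pr_01.
Qed.
End Tail.
Section Helpers.
Variable R : realType.

Lemma meas_le (x : R) : measurable [set y : R | y <= x].
Proof.
rewrite (_ : [set y : R | y <= x] = `]-oo, x]%classic); first exact: measurable_itv.
by apply/seteqP; split => y /=; rewrite in_itv.
Qed.

Lemma dcdf_ge0 (Q : probability R R) x : 0 <= dcdf Q x.
Proof. by apply: fine_ge0; apply: measure_ge0. Qed.

Lemma dcdf_le1 (Q : probability R R) x : dcdf Q x <= 1.
Proof.
rewrite /dcdf -[1]/(fine 1%E); apply: fine_le; rewrite ?fin_num_measure //; first exact: meas_le.
apply: probability_le1; exact: meas_le.
Qed.

Lemma dcdf_mono (Q : probability R R) x y : x <= y -> dcdf Q x <= dcdf Q y.
Proof.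
move=> xy; rewrite /dcdf; apply: fine_le; rewrite ?fin_num_measure //; try exact: meas_le.
apply: le_measure; rewrite ?inE; try exact: meas_le.
by move=> z /= zx; apply: le_trans xy.
Qed.

Lemma dcdf_cdf d (T : measurableType d) (P : probability T R) (X : {RV P >-> R})
  (Q : probability R R) : (forall A, measurable A -> P (X @^-1` A) = Q A) ->
  forall r, dcdf Q r = fine (cdf X r).
Proof.
move=> hX r; rewrite /cdf /dcdf /=.
have -> : distribution P X `]-oo, r] = P (X @^-1` `]-oo, r]) by [].
rewrite hX; last exact: measurable_itv.
by congr (fine (Q _)); apply/seteqP; split => y /=; rewrite in_itv.
Qed.

Lemma cdf_small d (T : measurableType d) (P : probability T R) (X : {RV P >-> R}) e :
  0 < e -> exists a, fine (cdf X a) < e.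
Proof.
move=> e0.
have h : (fine \o cdf X) x @[x --> -oo%R] --> 0%R.
  apply: fine_cvg; exact: cvg_cdfNy0.
have : \forall t \near -oo%R, (fine \o cdf X) t < e by exact: (@cvgr_lt R _ _ _ _ _ h _ e0).
move=> /filter_ex [a ha]; by exists a.
Qed.

Lemma cdf_big d (T : measurableType d) (P : probability T R) (X : {RV P >-> R}) e :
  e < 1 -> exists a, e < fine (cdf X a).
Proof.
move=> e0.
have h : (fine \o cdf X) x @[x --> +oo%R] --> (1 : R).
  apply: fine_cvg; exact: cvg_cdfy1.
have : \forall t \near +oo%R, e < (fine \o cdf X) t by exact: (@cvgr_gt R _ _ _ _ _ h _ e0).
move=> /filter_ex [a ha]; by exists a.
Qed.
End Helpers.
Section Var.
Variable R : realType.

Lemma sum_cst_seq (T : Type) (s : seq T) (c : R) : \sum_(p <- s) c = c * (size s)%:R.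
Proof.
elim: s => [|x s IH]; first by rewrite big_nil mulr0.
by rewrite big_cons IH /= -addn1 natrD; ring.
Qed.

Lemma var_bound (ps : seq R) :
  let N := (size ps)%:R in let mu := \sum_(p <- ps) p in
  0 < N -> N * \sum_(p <- ps) (p * (1 - p)) <= N * mu - mu ^+ 2.
Proof.
move=> N mu N0.
have h : 0 <= \sum_(p <- ps) (N * p - mu) ^+ 2 by apply: sumr_ge0 => p _; exact: sqr_ge0.
have e : \sum_(p <- ps) (N * p - mu) ^+ 2 =
   N^+2 * \sum_(p <- ps) p ^+ 2 - 2 * N * mu * mu + mu ^+ 2 * N.
  have -> : \sum_(p <- ps) (N * p - mu) ^+ 2 =
     \sum_(p <- ps) (N^+2 * p^+2 - (2 * N * mu) * p + mu ^+ 2).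
    by apply: eq_bigr => p _; ring.
  by rewrite !big_split /= sumrN -!mulr_sumr sum_cst_seq -/N -/mu; ring.
have e2 : \sum_(p <- ps) p * (1 - p) = mu - \sum_(p <- ps) p ^+ 2.
  rewrite /mu -sumrB; apply: eq_bigr => p _; ring.
rewrite e in h; rewrite e2.
have : mu ^+ 2 * N <= N ^+ 2 * \sum_(p <- ps) p ^+ 2 by lra.
move=> h2.
have h3 : mu ^+ 2 <= N * \sum_(p <- ps) p ^+ 2.
  by rewrite -(ler_pM2r N0); move: h2; rewrite expr2; lra.
lra.
Qed.

Lemma psi_ok (n g L s : R) : 0 < n -> 0 <= g -> 0 < L -> 0 <= s -> s ^+ 2 = 2 * g * L / n ->
  let e := 5 / 4 * s + 4 * L / n in
  4 * L / n <= e /\ 4 * (25/32) * L * (g + e) <= n * e ^+ 2.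
Proof.
move=> n0 g0 L0 s0 hs e.
have l0 : 0 < L / n by apply: divr_gt0.
split; first by rewrite /e; lra.
set l := L / n in l0 hs e *.
have hL : L = n * l by rewrite /l; field; apply: lt0r_neq0.
have hs' : s ^+ 2 = 2 * g * l by rewrite hs /l; field; apply: lt0r_neq0.
rewrite hL.
suff : 4 * (25/32) * l * (g + e) <= e ^+ 2.
  move=> h.
  have -> : 4 * (25 / 32) * (n * l) * (g + e) = n * (4 * (25 / 32) * l * (g + e)) by ring.
  by rewrite ler_pM2l.
have he : e = 5/4 * s + 4 * l by rewrite /e /l; ring.
rewrite he.
have hgl : g * l = s ^+ 2 / 2 by rewrite hs'; field.
have hsl : 0 <= s * l by apply: mulr_ge0; lra.
have -> : 4 * (25 / 32) * l * (g + (5 / 4 * s + 4 * l)) = 25/8 * (g * l) + 125/32 * (s * l) + 25/2 * l^+2 by field.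
rewrite hgl.
have -> : (5 / 4 * s + 4 * l) ^+ 2 = 25/16 * s^+2 + 10 * (s * l) + 16 * l^+2 by field.
have := sqr_ge0 l; lra.
Qed.
End Var.


Section Misc.
Variable R : realType.

Lemma mem_le_set (a x : R) : (a \in [set y : R | y <= x]) = (a <= x).
Proof. by apply/idP/idP => [/set_mem //|h]; exact: mem_set. Qed.

Lemma le_sum_mem (T : eqType) (s : seq T) (f : T -> R) p :
  (forall q, 0 <= f q) -> p \in s -> f p <= \sum_(q <- s) f q.
Proof.
move=> f0; elim: s => [|y s IH] //; rewrite in_cons big_cons => /orP[/eqP ->|ps].
  by rewrite lerDl sumr_ge0.
by rewrite (le_trans (IH ps)) // lerDr.
Qed.

Lemma cont_sum (T : eqType) (s : seq T) (f : T -> R -> R) :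
  (forall p, p \in s -> continuous (f p)) -> continuous (fun x => \sum_(p <- s) f p x).
Proof.
elim: s => [|y s IH] h.
  have -> : (fun x : R => \sum_(p <- [::]) f p x) = fun=> 0.
    by apply: funext => x; rewrite big_nil.
  exact: cst_continuous.
have -> : (fun x => \sum_(p <- y :: s) f p x) = (f y + (fun x => \sum_(p <- s) f p x)).
  by apply: funext => x; rewrite big_cons.
move=> x; apply: continuousD; first by apply: h; rewrite mem_head.
by apply: IH => p ps; apply: h; rewrite in_cons ps orbT.
Qed.

Lemma common_low (T : eqType) (s : seq T) (f : T -> R -> R) e :
  (forall p, p \in s -> {homo f p : x y / x <= y}) ->
  (forall p, p \in s -> exists a, f p a <= e) -> exists a, forall p, p \in s -> f p a <= e.
Proof.
elim: s => [|y s IH] hm hx; first by exists 0.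
have [a1 h1] := hx y (mem_head _ _).
have [a2 h2] : exists a, forall p, p \in s -> f p a <= e.
  by apply: IH => p ps; [apply: hm | apply: hx]; rewrite in_cons ps orbT.
exists (Num.min a1 a2) => p; rewrite in_cons => /orP[/eqP ->|ps].
  apply: le_trans h1; apply: hm; [exact: mem_head | by rewrite ge_min lexx].
apply: le_trans (h2 p ps); apply: hm; [by rewrite in_cons ps orbT | by rewrite ge_min lexx orbT].
Qed.

Lemma common_high (T : eqType) (s : seq T) (f : T -> R -> R) e :
  (forall p, p \in s -> {homo f p : x y / x <= y}) ->
  (forall p, p \in s -> exists a, e <= f p a) -> exists a, forall p, p \in s -> e <= f p a.
Proof.
elim: s => [|y s IH] hm hx; first by exists 0.
have [a1 h1] := hx y (mem_head _ _).
have [a2 h2] : exists a, forall p, p \in s -> e <= f p a.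
  by apply: IH => p ps; [apply: hm | apply: hx]; rewrite in_cons ps orbT.
exists (Num.max a1 a2) => p; rewrite in_cons => /orP[/eqP ->|ps].
  apply: le_trans h1 _; apply: hm; [exact: mem_head | by rewrite le_max lexx].
apply: le_trans (h2 p ps) _; apply: hm; [by rewrite in_cons ps orbT | by rewrite le_max lexx orbT].
Qed.
Lemma ler_sum_mem (T : eqType) (s : seq T) (F G : T -> R) :
  (forall p, p \in s -> F p <= G p) -> \sum_(p <- s) F p <= \sum_(p <- s) G p.
Proof. by move=> h; rewrite big_seq [X in _ <= X]big_seq; apply: ler_sum. Qed.
End Misc.

Theorem theorem1 (R : realType) (d : measure_display) (T : measurableType d)
  (P : probability T R) (t : nat) (alpha : R) (Q : nat -> probability R R)
  (B : nat -> nat) (u : nat -> nat -> {RV P >-> R}) (k : nat) (delta : R) :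
  (0 < t)%N -> 0 < alpha < 1 ->
  (forall j, (1 <= j <= t)%N -> continuous (dcdf (Q j))) ->
  (forall j, (1 <= j <= t)%N -> (1 <= B j)%N) ->
  (forall j i, (1 <= j <= t)%N -> (i < B j)%N ->
     forall A : set R, measurable A -> P (u j i @^-1` A) = Q j A) ->
  mutually_independent [set ji : nat * nat | (1 <= ji.1 <= t)%N /\ (ji.2 < B ji.1)%N]
    (fun ji => u ji.1 ji.2) ->
  (1 <= k <= t)%N -> 0 < delta < 1 ->
  let Btk := (\sum_(t.+1 - k <= j < t.+1) B j)%N in
  let Fhat := fun (w : T) (x : R) =>
    (\sum_(t.+1 - k <= j < t.+1) \sum_(i < B j) ((u j i w <= x)%R%:R : R)) / Btk%:R in
  let qhat := fun w => left_quantile (1 - alpha) (Fhat w) in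
  let phi := \big[Num.max/0]_(t.+1 - k <= j < t.+1) sup_dist (dcdf (Q j)) (dcdf (Q t)) in
  let psi := 5 / 4 * Num.sqrt (2 * alpha * (1 - alpha) * ln (2 / delta) / Btk%:R)
             + 4 * ln (2 / delta) / Btk%:R in
  exists E : set T, measurable E /\
    E `<=` [set w | `|dcdf (Q t) (qhat w) - (1 - alpha)| <= phi + psi] /\
    ((1 - delta)%:E <= P E)%E.
Proof.
move=> t0 /andP[a0 a1] hcont hB hdist hind /andP[k1 kt] /andP[d0 d1] Btk Fhat qhat phi psi.
pose r := index_iota (t.+1 - k) t.+1.
pose s := [seq (j, i) | j <- r, i <- iota 0 (B j)].
have hr : forall j, j \in r -> (1 <= j <= t)%N.
  by move=> j; rewrite mem_index_iota => /andP[h1 h2]; apply/andP; split; lia.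
have hs : forall p, p \in s -> (1 <= p.1 <= t)%N /\ (p.2 < B p.1)%N.
  move=> p /allpairsPdep [j [i [hj hi ->]]] /=; split; first exact: hr.
  by move: hi; rewrite mem_iota add0n => /andP[].
have us : uniq s.
  apply: allpairs_uniq_dep; first exact: iota_uniq.
    by move=> j _; exact: iota_uniq.
  by move=> [j1 i1] [j2 i2] _ _ /= [-> ->].
have sumE : forall f : nat -> nat -> R,
    (\sum_(t.+1 - k <= j < t.+1) \sum_(i < B j) f j i) = \sum_(p <- s) f p.1 p.2.
  move=> f; rewrite big_allpairs_dep /=; apply: eq_bigr => j _.
  by rewrite -(big_mkord xpredT) /index_iota subn0.
pose N : R := Btk%:R.
have NE : N = \sum_(p <- s) 1.
  rewrite /N /Btk natr_sum -(sumE (fun _ _ => 1)); apply: eq_bigr => j _.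
  by rewrite sumr_const card_ord.
have NS : N = (size s)%:R by rewrite NE sum_cst_seq mul1r.
have ts : (t, 0%N) \in s.
  apply/allpairsPdep; exists t, 0%N; split => //.
    by rewrite mem_index_iota; apply/andP; split; lia.
  by rewrite mem_iota add0n; apply/andP; split => //; apply: hB; apply/andP; split.
have N0 : 0 < N.
  rewrite NS ltr0n lt0n size_eq0; apply/eqP => e; by rewrite e in ts.
pose g := alpha * (1 - alpha).
have g0 : 0 <= g by rewrite /g; apply: mulr_ge0; lra.
pose L := ln (2 / delta).
have L0 : 0 < L by apply: ln_gt0; rewrite ltr_pdivlMr //; lra.
have eL : expR (- L) = delta / 2.
  rewrite expRN /L lnK ?invf_div // posrE; apply: divr_gt0 => //; lra.
pose sq := Num.sqrt (2 * alpha * (1 - alpha) * L / N).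
have sq0 : 0 <= sq by exact: sqrtr_ge0.
have sqE : sq ^+ 2 = 2 * g * L / N.
  rewrite /sq sqr_sqrtr; first by rewrite /g; field; apply: lt0r_neq0.
  apply: divr_ge0; last exact: ltW.
  apply: mulr_ge0; last exact: ltW.
  apply: mulr_ge0; [apply: mulr_ge0|]; lra.
have psiE : psi = 5 / 4 * sq + 4 * L / N by [].
have [psiL psiq] := @psi_ok R N g L sq N0 g0 L0 sq0 sqE.
rewrite -psiE in psiL psiq.
have psi0 : 0 < psi.
  apply: lt_le_trans psiL; apply: divr_gt0 => //; lra.
pose X := fun ji : nat * nat => u ji.1 ji.2.
pose Fle := fun (x : R) (_ : nat * nat) => [set y : R | y <= x].
pose Fgt := fun (x : R) (_ : nat * nat) => ~` [set y : R | y <= x].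
have mFle : forall x p, measurable (Fle x p) by move=> x p; exact: meas_le.
have mFgt : forall x p, measurable (Fgt x p) by move=> x p; apply: measurableC; exact: meas_le.
have sI : forall p, p \in s ->
    [set ji : nat * nat | (1 <= ji.1 <= t)%N /\ (ji.2 < B ji.1)%N] p by move=> p /hs.
have prle : forall x p, p \in s -> @pr d T R P _ X (Fle x) p = dcdf (Q p.1) x.
  move=> x p ps; have [h1 h2] := hs p ps.
  by rewrite /pr /dcdf /X hdist //; exact: meas_le.
have prgt : forall x p, p \in s -> @pr d T R P _ X (Fgt x) p = 1 - dcdf (Q p.1) x.
  move=> x p ps; have [h1 h2] := hs p ps.
  rewrite /pr /Fgt -preimage_setC probability_setC; last exact: measurable_funPTI (meas_le _ _).
  rewrite /X hdist //; last exact: meas_le.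
  rewrite /dcdf -[Q p.1 _]fineK ?fin_num_measure //; last exact: meas_le.
pose cntL := fun w x => \sum_(p <- s) ((u p.1 p.2 w <= x)%R%:R : R).
have cntle : forall w x, @cnt d T R P _ X (Fle x) s w = cntL w x.
  by move=> w x; apply: eq_bigr => p _; rewrite /X /Fle mem_le_set.
have cntsum : forall w x, cntL w x + @cnt d T R P _ X (Fgt x) s w = N.
  move=> w x; rewrite NE /cntL /cnt -big_split; apply: eq_bigr => p _ /=.
  rewrite /Fgt /X in_setC mem_le_set; by case: (u p.1 p.2 w <= x); rewrite /= ?mulr1n ?mulr0n ?addr0 ?add0r.
have FhatE : forall w x, Fhat w x = cntL w x / N.
  by move=> w x; rewrite /Fhat (sumE (fun j i => ((u j i w <= x)%R%:R : R))).
have cntL_mono : forall w x y, x <= y -> cntL w x <= cntL w y.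
  move=> w x y xy; apply: ler_sum => p _.
  case: (boolP (u p.1 p.2 w <= x)) => h; last by rewrite /= ler0n.
  by rewrite (le_trans h xy).
have Fhat_mono : forall w x y, x <= y -> Fhat w x <= Fhat w y.
  by move=> w x y xy; rewrite !FhatE ler_pM2r ?invr_gt0 // cntL_mono.
pose Fbar := fun x => (\sum_(p <- s) dcdf (Q p.1) x) / N.
have Fbar_mono : forall x y, x <= y -> Fbar x <= Fbar y.
  move=> x y xy; rewrite /Fbar ler_pM2r ?invr_gt0 //.
  by apply: ler_sum => p _; exact: dcdf_mono.
have Fbar0 : forall x, 0 <= Fbar x.
  move=> x; apply: divr_ge0; last exact: ltW.
  by apply: sumr_ge0 => p _; exact: dcdf_ge0.
have Fbar1 : forall x, Fbar x <= 1.
  move=> x; rewrite /Fbar ler_pdivrMr // mul1r NE.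
  by apply: ler_sum => p _; exact: dcdf_le1.
have sumle : forall x, \sum_(p <- s) @pr d T R P _ X (Fle x) p = N * Fbar x.
  move=> x; rewrite /Fbar mulrC divfK ?lt0r_neq0 //.
  by apply: eq_big_seq => p ps; rewrite prle.
have sumgt : forall x, \sum_(p <- s) @pr d T R P _ X (Fgt x) p = N - N * Fbar x.
  move=> x; rewrite -sumle NE -sumrB.
  by apply: eq_big_seq => p ps; rewrite prgt // prle.
have ivt : forall c, 0 < c < 1 -> exists x, Fbar x = c.
  move=> c /andP[c0 c1].
  have [a ha] : exists a, forall p, p \in s -> dcdf (Q p.1) a <= c.
    apply: common_low => p ps; first by move=> x y; exact: dcdf_mono.
    have [h1 h2] := hs p ps.
    have [a ha] := @cdf_small R _ _ P (u p.1 p.2) c c0.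
    by exists a; rewrite (@dcdf_cdf R _ _ P (u p.1 p.2) (Q p.1) (hdist _ _ h1 h2)); exact: ltW.
  have [b hb] : exists b, forall p, p \in s -> c <= dcdf (Q p.1) b.
    apply: common_high => p ps; first by move=> x y; exact: dcdf_mono.
    have [h1 h2] := hs p ps.
    have [b hb] := @cdf_big R _ _ P (u p.1 p.2) c c1.
    by exists b; rewrite (@dcdf_cdf R _ _ P (u p.1 p.2) (Q p.1) (hdist _ _ h1 h2)); exact: ltW.
  pose b' := Num.max a b.
  pose G := fun x => \sum_(p <- s) dcdf (Q p.1) x.
  have Ga : G a <= N * c.
    rewrite NE mulr_suml; apply: ler_sum_mem => p ps.
    by rewrite mul1r; exact: ha.
  have Gb : N * c <= G b'.
    rewrite NE mulr_suml; apply: ler_sum_mem => p ps.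
    rewrite mul1r; apply: le_trans (hb p ps) _; apply: dcdf_mono.
    by rewrite le_max lexx orbT.
  have ab : a <= b' by rewrite le_max lexx.
  have cG : continuous G.
    apply: cont_sum => p ps; have [h1 _] := hs p ps; exact: hcont.
  have cW : {within `[a, b'], continuous G} by apply: continuous_subspaceT.
  have := @IVT R G a b' (N * c) ab cW.
  case.
    apply/andP; split; first by rewrite ge_min Ga.
    by rewrite le_max Gb orbT.
  move=> x _ Gx; exists x; rewrite /Fbar -/(G x) Gx mulrC mulKf //; exact: lt0r_neq0.
pose Aw := fun w => [set x | 1 - alpha <= Fhat w x].
pose M := fun w => \sum_(p <- s) `|u p.1 p.2 w|.
have hM : forall w p, p \in s -> `|u p.1 p.2 w| <= M w.
  move=> w p ps.
  exact: (@le_sum_mem R _ s (fun q => `|u q.1 q.2 w|) p (fun q => normr_ge0 _) ps).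
have cntM : forall w, cntL w (M w) = N.
  move=> w; rewrite NE /cntL; apply: eq_big_seq => p ps.
  by have := hM w p ps; rewrite ler_norml => /andP[_ ->].
have cntlow : forall w y, y < - M w -> cntL w y = 0.
  move=> w y hy; rewrite /cntL big_seq big1 // => p ps.
  suff -> : (u p.1 p.2 w <= y) = false by [].
  apply/negbTE; rewrite -ltNge; apply: lt_le_trans hy _.
  by have := hM w p ps; rewrite ler_norml => /andP[-> _].
have Aw_ne : forall w, Aw w !=set0.
  move=> w; exists (M w); rewrite /Aw /= FhatE cntM divff ?lt0r_neq0 //; lra.
have Aw_lb : forall w, has_lbound (Aw w).
  move=> w; exists (- M w) => y; rewrite /Aw /= => hy.
  rewrite leNgt; apply/negP => hy'.
  by move: hy; rewrite FhatE cntlow // mul0r; lra.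
have qle : forall w x, 1 - alpha <= Fhat w x -> qhat w <= x.
  by move=> w x hx; exact: (ge_inf (Aw_lb w)).
have qlt : forall w x, qhat w < x -> exists2 y, 1 - alpha <= Fhat w y & y < x.
  by move=> w x hx; have [y hy yx] := inf_lt (Aw_ne w) hx; exists y.
pose K := 25 / 32 : R.
have bad1 : exists E1 : set T, measurable E1 /\ (P E1 <= (delta / 2)%:E)%E /\
    (forall w, ~ E1 w -> Fbar (qhat w) <= 1 - alpha + psi).
  case: (ltP (1 - alpha + psi) 1) => hc; last first.
    exists set0; split => //; split; first by rewrite measure0 lee_fin; lra.
    by move=> w _; apply: le_trans (Fbar1 _) hc.
  have [x hx] : exists x, Fbar x = 1 - alpha + psi by apply: ivt; apply/andP; split; lra.
  pose pr1 := @pr d T R P _ X (Fgt x).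
  exists [set w | (N * alpha <= @cnt d T R P _ X (Fgt x) s w)%R].
  split; first exact: D_meas.
  split.
    pose v := \sum_(p <- s) pr1 p * (1 - pr1 p).
    have muE : \sum_(p <- s) pr1 p = N * (alpha - psi) by rewrite /pr1 sumgt hx; ring.
    have hv : N * v <= N * (N * (alpha - psi)) - (N * (alpha - psi)) ^+ 2.
      have := @var_bound R (map pr1 s); rewrite /= size_map -NS !big_map muE; apply; exact: N0.
    have v0 : 0 <= v.
      apply: sumr_ge0 => p _; have := @pr_01 d T R P _ X (Fgt x) (mFgt x) p; rewrite -/pr1 => /andP[h1 h2].
      apply: mulr_ge0; lra.
    have hv2 : v <= N * (g + psi).
      rewrite -(ler_pM2l N0); apply: le_trans hv _.
      rewrite -subr_ge0.
      have -> : N * (N * (g + psi)) - (N * (N * (alpha - psi)) - (N * (alpha - psi)) ^+ 2)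
               = (N * N) * (psi * (2 - 2 * alpha + psi)) by rewrite /g; ring.
      apply: mulr_ge0; first by apply: mulr_ge0; lra.
      apply: mulr_ge0; lra.
    have hvv : 0 <= v <= N * (g + psi) by apply/andP; split.
    have [l [hl hlb]] := @choose_lambda R N g psi L v N0 g0 L0 hvv psiL psiq.
    apply: le_trans (@tail_bound d T R P _ _ X (Fgt x) hind (mFgt x) s (N * alpha) l us sI hl) _.
    rewrite lee_fin -eL ler_expR -/pr1 muE.
    have -> : N * alpha - N * (alpha - psi) = N * psi by ring.
    exact: hlb.
  move=> w hw.
  have hlt : @cnt d T R P _ X (Fgt x) s w < N * alpha by rewrite ltNge; apply/negP.
  have hF : 1 - alpha <= Fhat w x.
    rewrite FhatE ler_pdivlMr //; have := cntsum w x; lra.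
  by apply: le_trans (Fbar_mono _ _ (qle w x hF)) _; rewrite hx.
have bad2 : exists E2 : set T, measurable E2 /\ (P E2 <= (delta / 2)%:E)%E /\
    (forall w, ~ E2 w -> 1 - alpha - psi <= Fbar (qhat w)).
  case: (ltP 0 (1 - alpha - psi)) => hc; last first.
    exists set0; split => //; split; first by rewrite measure0 lee_fin; lra.
    by move=> w _; apply: le_trans hc (Fbar0 _).
  have [x hx] : exists x, Fbar x = 1 - alpha - psi by apply: ivt; apply/andP; split; lra.
  pose pr1 := @pr d T R P _ X (Fle x).
  exists [set w | (N * (1 - alpha) <= @cnt d T R P _ X (Fle x) s w)%R].
  split; first exact: D_meas.
  split.
    pose v := \sum_(p <- s) pr1 p * (1 - pr1 p).
    have muE : \sum_(p <- s) pr1 p = N * (1 - alpha - psi) by rewrite /pr1 sumle hx.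
    have hv : N * v <= N * (N * (1 - alpha - psi)) - (N * (1 - alpha - psi)) ^+ 2.
      have := @var_bound R (map pr1 s); rewrite /= size_map -NS !big_map muE; apply; exact: N0.
    have v0 : 0 <= v.
      apply: sumr_ge0 => p _; have := @pr_01 d T R P _ X (Fle x) (mFle x) p; rewrite -/pr1 => /andP[h1 h2].
      apply: mulr_ge0; lra.
    have hv2 : v <= N * (g + psi).
      rewrite -(ler_pM2l N0); apply: le_trans hv _.
      rewrite -subr_ge0.
      have -> : N * (N * (g + psi)) - (N * (N * (1 - alpha - psi)) - (N * (1 - alpha - psi)) ^+ 2)
               = (N * N) * (psi * (2 * alpha + psi)) by rewrite /g; ring.
      apply: mulr_ge0; first by apply: mulr_ge0; lra.
      apply: mulr_ge0; lra.
    have hvv : 0 <= v <= N * (g + psi) by apply/andP; split.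
    have [l [hl hlb]] := @choose_lambda R N g psi L v N0 g0 L0 hvv psiL psiq.
    apply: le_trans (@tail_bound d T R P _ _ X (Fle x) hind (mFle x) s (N * (1 - alpha)) l us sI hl) _.
    rewrite lee_fin -eL ler_expR -/pr1 muE.
    have -> : N * (1 - alpha) - N * (1 - alpha - psi) = N * psi by ring.
    exact: hlb.
  move=> w hw.
  have hlt : cntL w x < N * (1 - alpha) by rewrite -cntle ltNge; apply/negP.
  rewrite leNgt; apply/negP => hq.
  have hqx : qhat w < x.
    rewrite ltNge; apply/negP => hxq.
    by have := Fbar_mono _ _ hxq; rewrite hx; lra.
  have [y hy yx] := qlt w x hqx.
  have := le_trans hy (Fhat_mono w _ _ (ltW yx)).
  rewrite FhatE ler_pdivlMr //; lra.
have hsr : forall p, p \in s -> p.1 \in r.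
  by move=> p /allpairsPdep [j [i [hj hi ->]]].
have hj : forall j, j \in r -> forall y, `|dcdf (Q j) y - dcdf (Q t) y| <= phi.
  move=> j jr y.
  apply: (@le_trans _ _ (sup_dist (dcdf (Q j)) (dcdf (Q t)))).
    apply: ub_le_sup; last by exists y.
    exists 1 => z [x' _ <-]; rewrite ler_norml.
    have := @dcdf_ge0 R (Q j) x'; have := @dcdf_le1 R (Q j) x'.
    have := @dcdf_ge0 R (Q t) x'; have := @dcdf_le1 R (Q t) x'.
    move=> h1 h2 h3 h4; apply/andP; split; lra.
  rewrite /phi; exact: (@le_bigmax_seq _ _ nat r 0 j xpredT (fun j => sup_dist (dcdf (Q j)) (dcdf (Q t))) jr isT).
have hphi : forall y, `|dcdf (Q t) y - Fbar y| <= phi.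
  move=> y.
  have e : dcdf (Q t) y - Fbar y = (\sum_(p <- s) (dcdf (Q t) y - dcdf (Q p.1) y)) / N.
    rewrite sumrB sum_cst_seq -NS /Fbar; field; exact: lt0r_neq0.
  rewrite e normrM [`|N^-1|]ger0_norm; last by rewrite invr_ge0; exact: ltW.
  rewrite ler_pdivrMr //; apply: le_trans (ler_norm_sum _ _ _) _.
  rewrite NE mulr_sumr; apply: ler_sum_mem => p ps; rewrite mulr1 distrC.
  exact: hj (hsr p ps) y.
have [E1 [mE1 [pE1 hE1]]] := bad1.
have [E2 [mE2 [pE2 hE2]]] := bad2.
have mU : measurable (E1 `|` E2) by exact: measurableU.
exists (~` (E1 `|` E2)); split; first exact: measurableC.
split.
  move=> w /= hw.
  have nE1 : ~ E1 w by move=> h; apply: hw; left.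
  have nE2 : ~ E2 w by move=> h; apply: hw; right.
  have h1 := hE1 w nE1; have h2 := hE2 w nE2.
  apply: le_trans (ler_distD (Fbar (qhat w)) _ _) _.
  apply: lerD; first exact: hphi.
  rewrite ler_norml; apply/andP; split; lra.
rewrite probability_setC //.
have hU : (P (E1 `|` E2) <= P E1 + P E2)%E by exact: measureU2.
have hz : (P (E1 `|` E2) <= delta%:E)%E.
  apply: le_trans hU _; apply: le_trans (leeD pE1 pE2) _.
  by rewrite -EFinD lee_fin; lra.
move: hz; rewrite -[P (E1 `|` E2)]fineK ?fin_num_measure // lee_fin => hz.
rewrite -EFinB lee_fin; lra.
Qed.
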